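(* Let $M$ be a $\mathrm{GF}(q)$-representable matroid, let $S$ and $T$ be disjoint subsets of $E(M)$ with $\kappa_M(S,T)=k$, and let $(A,B)$ be a partition of $E(M)$ with $S\subseteq A$, $T\subseteq B$ and $\lambda_M(A)=k$. Let $(C,D)$ be a partition of $E(M)-(S\cup T)$ such that $\lambda_{M/C\setminus D}(S)=k$. Then $(M^+_{(A,B)}/C\setminus D)|X=M^+_{(A,B)}|X$.
   Context: For a matroid $M$ with ground set $E$, $\lambda_M(X):=r_M(X)+r_M(E-X)-r(M)$, and for disjoint $S,T\subseteq E$, $\kappa_M(S,T):=\min\{\lambda_M(X):S\subseteq X\subseteq E-T\}$. Fix a representation of $M$ by an $r\times E$ matrix $D$ over $\mathrm{GF}(q)$, and for $Y\subseteq E$ let $\langle Y\rangle$ be the span of the columns of $D$ indexed by $Y$. If $\lambda_M(A)=k$ for a partition $(A,B)$ of $E$, then $\langle A\rangle\cap\langle B\rangle$ is a $k$-dimensional subspace of $\mathrm{GF}(q)^r$. The matroid $M^+_{(A,B)}$ is obtained from $M$ by adding a new set $X$ of $(q^k-1)/(q-1)$ elements, represented by vectors forming a copy of the projective geometry $\mathrm{PG}(k-1,q)$ inside $\langle A\rangle\cap\langle B\rangle$ (one vector from each 1-dimensional subspace of $\langle A\rangle\cap\langle B\rangle$); i.e. it is the matroid of the matrix $D$ extended by these columns. $|X$ denotes restriction to $X$. *)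

(* Defs.v *)
From HB Require Import structures.
From mathcomp Require Import all_boot all_algebra all_field.
Set Implicit Arguments. Unset Strict Implicit. Unset Printing Implicit Defensive.
Import GRing.Theory.
Local Open Scope ring_scope.

(* A represented matroid: ground set E (a finType), element e represented by
   the vector v e in F^r (row vectors, mathcomp convention). *)

Definition vspan (F : fieldType) (E : finType) (r : nat) (v : E -> 'rV[F]_r)
  (Y : {set E}) : 'M[F]_r := (\sum_(i in Y) <<v i>>)%MS.

Definition mrank (F : fieldType) (E : finType) (r : nat) (v : E -> 'rV[F]_r)
  (Y : {set E}) : nat := \rank (vspan v Y).

Definition minor_rank (F : fieldType) (E : finType) (r : nat) (v : E -> 'rV[F]_r)
  (C D : {set E}) (Y : {set E}) : nat :=
  (mrank v (Y :|: C) - mrank v C)%N.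

Definition minor_lambda (F : fieldType) (E : finType) (r : nat) (v : E -> 'rV[F]_r)
  (C D : {set E}) (Y : {set E}) : nat :=
  let G := ~: (C :|: D) in
  (minor_rank v C D Y + minor_rank v C D (G :\: Y) - minor_rank v C D G)%N.

Definition mlambda (F : fieldType) (E : finType) (r : nat) (v : E -> 'rV[F]_r)
  (Y : {set E}) : nat :=
  (mrank v Y + mrank v (~: Y) - mrank v setT)%N.

Definition kappa (F : fieldType) (E : finType) (r : nat) (v : E -> 'rV[F]_r)
  (S T : {set E}) : nat :=
  \big[minn/mlambda v S]_(Y : {set E} | (S \subset Y) && [disjoint Y & T])
     mlambda v Y.

(* x : X -> F^r picks exactly one (nonzero) vector from each 1-dimensional
   subspace of the subspace W, i.e. {x i} is a copy of PG(dim W - 1, q) in W. *)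
Definition proj_geom_of (F : fieldType) (X : finType) (r : nat)
  (x : X -> 'rV[F]_r) (W : 'M[F]_r) : Prop :=
  [/\ forall i, x i != 0,
      forall i, (x i <= W)%MS,
      forall i j, (x i <= x j)%MS -> i = j
    & forall w : 'rV[F]_r, w != 0 -> (w <= W)%MS -> exists i, (w <= x i)%MS].

(* The representation of M^+_(A,B): ground set E + X. *)
Definition ext_rep (F : fieldType) (E X : finType) (r : nat)
  (v : E -> 'rV[F]_r) (x : X -> 'rV[F]_r) : (E + X)%type -> 'rV[F]_r :=
  fun e => match e with inl a => v a | inr i => x i end.

(* Main.v *)
Require Import Defs.
From HB Require Import structures.
From mathcomp Require Import all_boot all_algebra all_field.
From mathcomp Require Import zify.
Import GRing.Theory.
Local Open Scope ring_scope.
Set Implicit Arguments. Unset Strict Implicit.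

Section Helpers.
Variables (F : fieldType) (E : finType) (r : nat) (v : E -> 'rV[F]_r).

Lemma vspan_sub1 (Y : {set E}) i : i \in Y -> (v i <= vspan v Y)%MS.
Proof. by move=> Hi; apply: (sumsmx_sup i) => //; rewrite genmxE. Qed.

Lemma vspanS (Y1 Y2 : {set E}) : Y1 \subset Y2 -> (vspan v Y1 <= vspan v Y2)%MS.
Proof.
move=> H; apply/sumsmx_subP => i Hi; rewrite genmxE.
by apply: vspan_sub1; apply: (subsetP H).
Qed.

Lemma vspanU1 (Y1 Y2 : {set E}) :
  (vspan v (Y1 :|: Y2) <= vspan v Y1 + vspan v Y2)%MS.
Proof.
apply/sumsmx_subP => i; rewrite genmxE in_setU => /orP [] Hi.
  by apply: submx_trans (addsmxSl _ _); apply: vspan_sub1.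
by apply: submx_trans (addsmxSr _ _); apply: vspan_sub1.
Qed.

Lemma vspanU2 (Y1 Y2 : {set E}) :
  (vspan v Y1 + vspan v Y2 <= vspan v (Y1 :|: Y2))%MS.
Proof. by rewrite addsmx_sub !vspanS // ?subsetUl ?subsetUr. Qed.

End Helpers.

Lemma rank_eq (F : fieldType) m1 m2 n (A : 'M[F]_(m1, n)) (B : 'M[F]_(m2, n)) :
  (A <= B)%MS -> (B <= A)%MS -> \rank A = \rank B.
Proof. by move=> h1 h2; apply/eqP; rewrite eqn_leq !mxrankS. Qed.

Theorem lemma4p1 (F : finFieldType) (E : finType) (r : nat)
  (v : E -> 'rV[F]_r) (S T A C D : {set E}) (k : nat)
  (X : finType) (x : X -> 'rV[F]_r) :
  [disjoint S & T] ->
  kappa v S T = k ->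
  S \subset A -> T \subset ~: A ->
  mlambda v A = k ->
  proj_geom_of x (vspan v A :&: vspan v (~: A))%MS ->
  C :|: D = ~: (S :|: T) -> [disjoint C & D] ->
  minor_lambda v C D S = k ->
  forall Y : {set X},
    minor_rank (ext_rep v x) (inl @: C) (inl @: D) (inr @: Y)
    = mrank (ext_rep v x) (inr @: Y).
Proof.
move=> dST _ SA TB lamA [_ xW _ _] CD dCD lamN Y.
set P := vspan v A; set Q := vspan v (~: A); set K := vspan v C.
set KA := vspan v (C :&: A); set KB := vspan v (C :&: ~: A).
set W := (P :&: Q)%MS.
have WK0 : \rank (W :&: K)%MS = 0%N.
  have eG : ~: (C :|: D) = S :|: T by rewrite CD setCK.
  have eGS : (S :|: T) :\: S = T.
    apply/setP => e; rewrite !inE; case eS: (e \in S); case eT: (e \in T) => //=.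
    by have := disjointFr dST eS; rewrite eT.
  have eC : C = (C :&: A) :|: (C :&: ~: A) by rewrite -setIUr setUCr setIT.
  have eSTC : (S :|: T) :|: C = (S :|: C) :|: (T :|: C).
    by apply/setP => e; rewrite !inE; case: (e \in S); case: (e \in T); case: (e \in C).
  have eAll : [set: E] = A :|: ~: A by rewrite setUCr.
  set SC := vspan v (S :|: C); set TC := vspan v (T :|: C).
  set P' := (P + K)%MS; set Q' := (Q + K)%MS.
  have KPQ : (K <= P + Q)%MS.
    apply: submx_trans (vspanS v (subsetT C)) _; rewrite eAll; exact: vspanU1.
  have KAB : (K <= KA + KB)%MS by rewrite /K {1}eC; exact: vspanU1.
  have KAP : (KA <= P)%MS by apply: vspanS; exact: subsetIr.
  have KBQ : (KB <= Q)%MS by apply: vspanS; exact: subsetIr.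
  have h1a := mxrank_sum_cap P Q.
  have h1b : \rank (vspan v [set: E]) = \rank (P + Q)%MS.
    rewrite eAll; apply: rank_eq; [exact: vspanU1 | exact: vspanU2].
  move: lamA; rewrite /mlambda /mrank -/P -/Q h1b => h1.
  move: lamN; rewrite /minor_lambda /minor_rank eG eGS /mrank -/SC -/TC -/K => h2.
  have h2a := mxrank_sum_cap SC TC.
  have h2b : \rank (vspan v (S :|: T :|: C)) = \rank (SC + TC)%MS.
    rewrite eSTC; apply: rank_eq; [exact: vspanU1 | exact: vspanU2].
  have h2c : (\rank K <= \rank (SC :&: TC)%MS)%N.
    by apply: mxrankS; rewrite sub_capmx !vspanS ?subsetUr.
  have h2d : (\rank K <= \rank SC)%N by apply: mxrankS; rewrite vspanS ?subsetUr.
  have h2e : (\rank K <= \rank TC)%N by apply: mxrankS; rewrite vspanS ?subsetUr.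
  have h2f : (\rank K <= \rank (vspan v (S :|: T :|: C)))%N.
    by apply: mxrankS; rewrite vspanS ?subsetUr.
  have h3 : (\rank (SC :&: TC)%MS <= \rank (P' :&: Q')%MS)%N.
    apply: mxrankS; apply: capmxS.
      apply: submx_trans (vspanU1 _ _ _) _; apply: addsmxS => //; exact: vspanS.
    apply: submx_trans (vspanU1 _ _ _) _; apply: addsmxS => //; exact: vspanS.
  have h4a := mxrank_sum_cap P' Q'.
  have h4b : \rank (P' + Q')%MS = \rank (P + Q)%MS.
    apply: rank_eq.
      by rewrite !addsmx_sub KPQ addsmxSl addsmxSr.
    by apply: addsmxS; apply: addsmxSl.
  have h5a := mxrank_sum_cap P KB.
  have h5b : \rank P' = \rank (P + KB)%MS.
    apply: rank_eq.
      rewrite addsmx_sub addsmxSl /=; apply: submx_trans KAB _.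
      by apply: addsmxS => //; apply: submx_trans KAP _.
    by apply: addsmxS => //; apply: vspanS; apply: subsetIl.
  have h5c := mxrank_sum_cap Q KA.
  have h5d : \rank Q' = \rank (Q + KA)%MS.
    apply: rank_eq.
      rewrite addsmx_sub addsmxSl /=; apply: submx_trans KAB _.
      by rewrite addsmx_sub addsmxSr /=; apply: submx_trans KBQ (addsmxSl _ _).
    by apply: addsmxS => //; apply: vspanS; apply: subsetIl.
  have h6a := mxrank_sum_cap KA KB.
  have h6b : \rank K = \rank (KA + KB)%MS.
    apply: rank_eq => //; rewrite /K eC; exact: vspanU2.
  have h7a := mxrank_sum_cap (Q :&: KA)%MS (P :&: KB)%MS.
  have h7b : (\rank (KA :&: KB)%MS <= \rank ((Q :&: KA) :&: (P :&: KB))%MS)%N.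
    apply: mxrankS; rewrite !sub_capmx capmxSl capmxSr.
    by rewrite (submx_trans (capmxSl _ _) KAP) (submx_trans (capmxSr _ _) KBQ).
  have h8 : (\rank (W :&: K)%MS <= \rank ((Q :&: KA) + (P :&: KB))%MS)%N.
    apply: mxrankS.
    have : (W :&: K <= KA + KB)%MS by apply: submx_trans (capmxSr _ _) KAB.
    case/sub_addsmxP => u eZ.
    have ZQ : (W :&: K <= Q)%MS by apply: submx_trans (capmxSl _ _) (capmxSr _ _).
    have ZP : (W :&: K <= P)%MS by apply: submx_trans (capmxSl _ _) (capmxSl _ _).
    set Z := (W :&: K)%MS in ZQ ZP eZ *.
    rewrite eZ.
    apply: addmx_sub_adds; rewrite sub_capmx submxMl andbT.
      have -> : u.1 *m KA = Z - u.2 *m KB by rewrite eZ addrK.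
      apply: addmx_sub => //; rewrite eqmx_opp; exact: submx_trans (submxMl _ _) KBQ.
    have -> : u.2 *m KB = Z - u.1 *m KA by rewrite eZ addrC addKr.
    apply: addmx_sub => //; rewrite eqmx_opp; exact: submx_trans (submxMl _ _) KAP.
  lia.
rewrite /minor_rank /mrank.
set XY := vspan (ext_rep v x) (inr @: Y).
set K' := vspan (ext_rep v x) (inl @: C).
have XYW : (XY <= W)%MS.
  apply/sumsmx_subP => i; rewrite genmxE => /imsetP [j _ ->]; exact: xW.
have K'K : (K' <= K)%MS.
  apply/sumsmx_subP => i; rewrite genmxE => /imsetP [j Hj ->] /=.
  exact: vspan_sub1.
have e1 := mxrank_sum_cap XY K'.
have e2 : \rank (XY :&: K')%MS = 0%N.
  apply/eqP; rewrite -leqn0 -WK0; apply: mxrankS; exact: capmxS.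
have e3 : \rank (vspan (ext_rep v x) (inr @: Y :|: inl @: C)) = \rank (XY + K')%MS.
  apply: rank_eq; [exact: vspanU1 | exact: vspanU2].
lia.
Qed.
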